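(* Let $\mathcal{A}:\mathbb{C}^{m\times n}\to\mathbb{C}^p$ be linear with rank-restricted isometry constant $\delta_r(\mathcal{A})$. Let $X,Y\in\mathbb{C}^{m\times n}$ satisfy $\langle X,Y\rangle=\mathrm{tr}(Y^HX)=0$ and $\mathrm{rank}(X+\alpha Y)\le r$ for all $\alpha\in\mathbb{C}$. Then $|\langle\mathcal{A}X,\mathcal{A}Y\rangle|\le\sqrt2\,\delta_r(\mathcal{A})\|X\|_F\|Y\|_F$, where $\langle u,v\rangle=v^Hu$ on $\mathbb{C}^p$.
   Context: $\|\cdot\|_F$ is the Frobenius norm and $\|\cdot\|_2$ the Euclidean norm. $\delta_r(\mathcal{A})$ is the smallest $\delta\ge0$ such that $(1-\delta)\|X\|_F^2\le\|\mathcal{A}X\|_2^2\le(1+\delta)\|X\|_F^2$ for all $X$ with $\mathrm{rank}(X)\le r$. *)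

(* Defs.v *)
From HB Require Import structures.
From mathcomp Require Import all_boot all_order all_algebra.
From mathcomp Require Import complex.
From mathcomp Require Import classical_sets reals.
Set Implicit Arguments. Unset Strict Implicit. Unset Printing Implicit Defensive.
Import Order.TTheory GRing.Theory Num.Theory.
Local Open Scope ring_scope.
Local Open Scope complex_scope.

Section Defs.
Variable R : realType.
Local Notation C := R[i].

Definition adjmx (m n : nat) (Y : 'M[C]_(m, n)) : 'M[C]_(n, m) :=
  map_mx (@conjc R) Y^T.

Definition innerM (m n : nat) (X Y : 'M[C]_(m, n)) : C := \tr (adjmx Y *m X).

Definition innerV (p : nat) (u v : 'cV[C]_p) : C := (adjmx v *m u) ord0 ord0.

Definition frob2 (m n : nat) (X : 'M[C]_(m, n)) : R :=
  \sum_(i < m) \sum_(j < n) ComplexField.Normc.normc (X i j) ^+ 2.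
Definition frob (m n : nat) (X : 'M[C]_(m, n)) : R := Num.sqrt (frob2 X).

Definition eucl2 (p : nat) (u : 'cV[C]_p) : R :=
  \sum_(i < p) ComplexField.Normc.normc (u i ord0) ^+ 2.

Definition RIP (m n p r : nat) (A : {linear 'M[C]_(m, n) -> 'cV[C]_p}) (d : R) :=
  0 <= d /\ forall X : 'M[C]_(m, n), (\rank X <= r)%N ->
    (1 - d) * frob2 X <= eucl2 (A X) <= (1 + d) * frob2 X.

Definition delta_r (m n p r : nat) (A : {linear 'M[C]_(m, n) -> 'cV[C]_p}) : R :=
  inf [set d | RIP r A d].
End Defs.

(* Main.v *)
Require Import Defs.
From HB Require Import structures.
From mathcomp Require Import all_boot all_order all_algebra.
From mathcomp Require Import complex.
From mathcomp Require Import classical_sets reals.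
From mathcomp Require Import ring lra.
Import Order.TTheory GRing.Theory Num.Theory.
Local Open Scope ring_scope.
Local Open Scope complex_scope.
Section S.
Variable R : realType.
Local Notation C := R[i].
Local Notation nc := (@ComplexField.Normc.normc R).
Lemma nc2 (z : C) : nc z ^+ 2 = complex.Re z ^+ 2 + complex.Im z ^+ 2.
Proof. case: z => a b /=; rewrite sqr_sqrtr //; exact: addr_ge0 (sqr_ge0 _) (sqr_ge0 _). Qed.
Lemma nc2D (u v : C) : nc (u + v) ^+ 2 = nc u ^+ 2 + nc v ^+ 2 + 2 * complex.Re (v^* * u).
Proof. rewrite !nc2; case: u => a b; case: v => c d /=. ring. Qed.
Lemma nc2le (u v : C) : nc (u + v) ^+ 2 <= 2 * nc u ^+ 2 + 2 * nc v ^+ 2.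
Proof. rewrite !nc2; case: u => a b; case: v => c d /=. have := sqr_ge0 (a - c); have := sqr_ge0 (b - d). rewrite !sqrrB !sqrrD. lra. Qed.
Lemma nc2M (u v : C) : nc (u * v) ^+ 2 = nc u ^+ 2 * nc v ^+ 2.
Proof. by rewrite ComplexField.Normc.normcM exprMn. Qed.
Lemma nc2N (u : C) : nc (- u) ^+ 2 = nc u ^+ 2.
Proof. rewrite !nc2; case: u => a b /=. ring. Qed.
Lemma nc2_ge0 (u : C) : 0 <= nc u ^+ 2.
Proof. exact: sqr_ge0. Qed.
Lemma ReD : {morph (@complex.Re R) : x y / x + y}. Proof. by move=> [? ?] [? ?]. Qed.
Lemma Re0 : complex.Re (0 : C) = 0. Proof. by []. Qed.
Lemma Re_sum I (s : seq I) (P : pred I) (F : I -> C) : complex.Re (\sum_(i <- s | P i) F i) = \sum_(i <- s | P i) complex.Re (F i).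
Proof. exact: (big_morph _ ReD Re0). Qed.
Lemma nc2Dsc (x y b : C) : nc (x + b * y) ^+ 2 = nc x ^+ 2 + nc b ^+ 2 * nc y ^+ 2 + 2 * complex.Re (b^* * (y^* * x)).
Proof. by rewrite nc2D nc2M rmorphM mulrA. Qed.
Lemma innerME {m n} (X Y : 'M[C]_(m, n)) : innerM X Y = \sum_(i < m) \sum_(j < n) (Y i j)^* * X i j.
Proof.
rewrite /innerM /mxtrace exchange_big; apply: eq_bigr => j _; rewrite mxE.
by apply: eq_bigr => i _; rewrite /adjmx !mxE.
Qed.
Lemma innerVE {p} (u v : 'cV[C]_p) : innerV u v = \sum_(i < p) (v i ord0)^* * u i ord0.
Proof. rewrite /innerV mxE; apply: eq_bigr => i _; by rewrite /adjmx !mxE. Qed.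
Lemma frob2Dsc {m n} (X Y : 'M[C]_(m, n)) b : frob2 (X + b *: Y) = frob2 X + nc b ^+ 2 * frob2 Y + 2 * complex.Re (b^* * innerM X Y).
Proof.
rewrite /frob2 innerME !mulr_sumr !Re_sum !mulr_sumr -!big_split /=.
apply: eq_bigr => i _; rewrite !mulr_sumr !Re_sum !mulr_sumr -!big_split /=.
by apply: eq_bigr => j _; rewrite !mxE nc2Dsc.
Qed.
Lemma eucl2Dsc {p} (u v : 'cV[C]_p) b : eucl2 (u + b *: v) = eucl2 u + nc b ^+ 2 * eucl2 v + 2 * complex.Re (b^* * innerV u v).
Proof.
rewrite /eucl2 innerVE !mulr_sumr !Re_sum !mulr_sumr -!big_split /=.
by apply: eq_bigr => i _; rewrite !mxE nc2Dsc.
Qed.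
Lemma ReN (z : C) : complex.Re (- z) = - complex.Re z. Proof. by case: z. Qed.
Lemma rip_ineq m n p r (A : {linear 'M[C]_(m, n) -> 'cV[C]_p}) (X Y : 'M[C]_(m, n)) d :
  RIP r A d -> innerM X Y = 0 -> (forall a : C, (\rank (X + a *: Y)%R <= r)%N) ->
  forall b, 2 * complex.Re (b^* * innerV (A X) (A Y)) <= d * (frob2 X + nc b ^+ 2 * frob2 Y).
Proof.
move=> [d0 H] hXY hr b.
have /andP[_ h1] := H _ (hr b).
have /andP[h2 _] := H _ (hr (- b)).
move: h1 h2; rewrite !linearD !linearZ /= !frob2Dsc !eucl2Dsc hXY !mulr0.
rewrite nc2N rmorphN mulNr ReN /= !addr0.
move: (frob2 X + _ * frob2 Y) => F; rewrite !mulrDl ?mulrBl !mul1r ?mulNr.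
move: (d * F) (complex.Re _) (_ * eucl2 (A Y)) => dF z e2; move: (eucl2 (A X)) => e1 h1 h2. lra.
Qed.
Lemma absbound (zr d x y : R) : 0 < x -> 0 < y ->
  (forall s, 2 * s * zr <= d * (x ^+ 2 + s ^+ 2 * y ^+ 2)) -> `|zr| <= d * x * y.
Proof.
move=> x0 y0 H.
set s := x / y.
have hx : x = s * y by rewrite /s divfK // gt_eqF.
have s0 : 0 < s by rewrite /s divr_gt0.
clearbody s.
have h1 := H s; have h2 := H (- s).
rewrite hx in h1 h2 *.
rewrite ler_norml; apply/andP; split.
- rewrite -(ler_pM2l s0). move: h2; rewrite !exprMn sqrrN => h. lra.
- rewrite -(ler_pM2l s0). move: h1; rewrite !exprMn => h. lra.
Qed.
Lemma frob2_ge0 {m n} (X : 'M[C]_(m, n)) : 0 <= frob2 X.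
Proof. by apply: sumr_ge0 => i _; apply: sumr_ge0 => j _; apply: sqr_ge0. Qed.
Lemma eucl2_ge0 {p} (u : 'cV[C]_p) : 0 <= eucl2 u.
Proof. by apply: sumr_ge0 => i _; apply: sqr_ge0. Qed.
Lemma frobK {m n} (X : 'M[C]_(m, n)) : frob X ^+ 2 = frob2 X.
Proof. by rewrite /frob sqr_sqrtr // frob2_ge0. Qed.
Lemma frob0 {m n} (X : 'M[C]_(m, n)) : frob X = 0 -> X = 0.
Proof.
move/eqP; rewrite sqrtr_eq0 => h.
have h0 : frob2 X = 0 by apply/le_anti; rewrite h frob2_ge0.
apply/matrixP => i j; rewrite mxE.
have hi := psumr_eq0P (fun i _ => sumr_ge0 _ (fun j _ => sqr_ge0 (nc (X i j)))) h0 (i := i) isT.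
have hj := psumr_eq0P (fun j _ => sqr_ge0 (nc (X i j))) hi (i := j) isT.
apply: ComplexField.Normc.eq0_normc; apply/eqP; rewrite -sqrf_eq0; exact/eqP.
Qed.
Lemma innerV0l {p} (v : 'cV[C]_p) : innerV 0 v = 0.
Proof. by rewrite innerVE big1 // => i _; rewrite mxE mulr0. Qed.
Lemma innerV0r {p} (v : 'cV[C]_p) : innerV v 0 = 0.
Proof. by rewrite innerVE big1 // => i _; rewrite mxE rmorph0 mul0r. Qed.
Lemma eucl2Z {p} (u : 'cV[C]_p) c : eucl2 (c *: u) = nc c ^+ 2 * eucl2 u.
Proof. by rewrite /eucl2 mulr_sumr; apply: eq_bigr => i _; rewrite mxE nc2M. Qed.
Lemma eucl2_le {p} (u v : 'cV[C]_p) : eucl2 (u + v) <= 2 * eucl2 u + 2 * eucl2 v.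
Proof.
rewrite /eucl2 !mulr_sumr -big_split /=; apply: ler_sum => i _; rewrite mxE; exact: nc2le.
Qed.
Lemma eucl2_0 p : eucl2 (0 : 'cV[C]_p) = 0.
Proof. by rewrite /eucl2 big1 // => i _; rewrite mxE ComplexField.Normc.normc0 expr0n. Qed.
Lemma eucl2_sum {p} N (w : 'I_N -> 'cV[C]_p) :
  eucl2 (\sum_(k < N) w k) <= 2 ^+ N * \sum_(k < N) eucl2 (w k).
Proof.
elim: N w => [|N IH] w; first by rewrite !big_ord0 eucl2_0 mulr0.
rewrite !big_ord_recl; apply: le_trans; first exact: eucl2_le.
have h := IH (fun k => w (lift ord0 k)).
have e0 := eucl2_ge0 (w ord0).
have e1 : 1 <= (2 : R) ^+ N by apply: exprn_ege1; lra.
move: h.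
move: (eucl2 (\sum_(i < N) w (lift ord0 i))) => E.
have S0 : 0 <= \sum_(i < N) eucl2 (w (lift ord0 i)) by apply: sumr_ge0 => i _; exact: eucl2_ge0.
move: (\sum_(i < N) eucl2 (w (lift ord0 i))) S0 => S S0 h.
rewrite exprS; move: ((2 : R) ^+ N) e1 h => t e1 h. nra.
Qed.
Lemma term_le_sum k (F : 'I_k -> R) i : (forall j, 0 <= F j) -> F i <= \sum_j F j.
Proof. by move=> h; rewrite (bigD1 i) //= lerDl sumr_ge0. Qed.
Lemma rip_nonempty m n p r (A : {linear 'M[C]_(m, n) -> 'cV[C]_p}) : exists d, RIP r A d.
Proof.
set M := \sum_(i < m) \sum_(j < n) eucl2 (A (delta_mx i j)).
have M0 : 0 <= M by apply: sumr_ge0 => i _; apply: sumr_ge0 => j _; exact: eucl2_ge0.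
have hb : forall X, eucl2 (A X) <= 2 ^+ m * 2 ^+ n * M * frob2 X.
  move=> X; rewrite {1}(matrix_sum_delta X) linear_sum.
  apply: (le_trans (eucl2_sum _ _)).
  rewrite -!mulrA ler_wpM2l ?exprn_ge0 //.
  rewrite /frob2 !mulr_sumr; refine (ler_sum _ _) => i _.
  rewrite linear_sum; apply: (le_trans (eucl2_sum _ _)).
  rewrite ler_wpM2l ?exprn_ge0 // mulr_sumr; refine (ler_sum _ _) => j _.
  rewrite linearZ /= eucl2Z mulrC ler_wpM2r ?sqr_ge0 //.
  apply: (le_trans (y := \sum_(j < n) eucl2 (A (delta_mx i j)))).
    by apply: term_le_sum => j0; exact: eucl2_ge0.
  by apply: term_le_sum => i0; apply: sumr_ge0 => j' _; exact: eucl2_ge0.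
exists (1 + 2 ^+ m * 2 ^+ n * M); split.
  by apply: addr_ge0 => //; rewrite mulr_ge0 // mulr_ge0 // exprn_ge0.
move=> X _; have f0 := frob2_ge0 X; have e0 := eucl2_ge0 (A X); have h := hb X.
have K0 : 0 <= 2 ^+ m * 2 ^+ n * M :> R by rewrite mulr_ge0 // mulr_ge0 // exprn_ge0.
move: h K0; move: (2 ^+ m * 2 ^+ n * M) => K h K0.
apply/andP; split; nra.
Qed.
Lemma main_bound m n p r (A : {linear 'M[C]_(m, n) -> 'cV[C]_p}) (X Y : 'M[C]_(m, n)) d :
  RIP r A d -> innerM X Y = 0 -> (forall a : C, (\rank (X + a *: Y)%R <= r)%N) ->
  0 < frob X -> 0 < frob Y ->
  nc (innerV (A X) (A Y)) <= Num.sqrt 2 * d * frob X * frob Y.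
Proof.
move=> HR hXY hr x0 y0.
have d0 : 0 <= d by case: HR.
have H := @rip_ineq m n p r A X Y d HR hXY hr.
move: H; case: (innerV (A X) (A Y)) => a b H.
rewrite -!frobK in H.
move: (frob X) (frob Y) x0 y0 H => x y x0 y0 H.
have ha : `|a| <= d * x * y.
  apply: absbound => // s; have := H (Complex s 0); rewrite nc2 /= => h; lra.
have hb : `|b| <= d * x * y.
  apply: absbound => // s; have := H (Complex 0 s); rewrite nc2 /= => h; lra.
have K0 : 0 <= d * x * y by apply: mulr_ge0; [apply: mulr_ge0 => //; exact: ltW | exact: ltW].
have -> : Num.sqrt 2 * d * x * y = Num.sqrt (2 * (d * x * y) ^+ 2).
  by rewrite sqrtrM // sqrtr_sqr ger0_norm // !mulrA.
rewrite /=; apply: ler_wsqrtr.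
move: ha hb; rewrite !ler_norml; move: (d * x * y) K0 => K K0 /andP[h1 h2] /andP[h3 h4].
nra.
Qed.
End S.

Theorem proposition5 (R : realType) (m n p r : nat)
  (A : {linear 'M[R[i]]_(m, n) -> 'cV[R[i]]_p}) (X Y : 'M[R[i]]_(m, n)) :
  innerM X Y = 0 ->
  (forall a : R[i], (\rank (X + a *: Y)%R <= r)%N) ->
  ComplexField.Normc.normc (innerV (A X) (A Y)) <= Num.sqrt 2 * delta_r r A * frob X * frob Y.
Proof.
move=> hXY hr.
have ne : ([set d | RIP r A d] !=set0)%classic.
  by case: (@rip_nonempty R m n p r A) => d hd; exists d.
have inf0 : 0 <= delta_r r A by apply: lb_le_inf => // d [].
have fx0 : 0 <= frob X by apply: sqrtr_ge0.
have fy0 : 0 <= frob Y by apply: sqrtr_ge0.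
have s0 : 0 < Num.sqrt 2 :> R by rewrite sqrtr_gt0 ltr0n.
have rhs0 : 0 <= Num.sqrt 2 * delta_r r A * frob X * frob Y.
  by apply: mulr_ge0 => //; apply: mulr_ge0 => //; apply: mulr_ge0 => //; exact: ltW.
have [hx|hx] := eqVneq (frob X) 0.
  have -> : innerV (A X) (A Y) = 0 by rewrite (@frob0 R _ _ _ hx) linear0 innerV0l.
  by rewrite ComplexField.Normc.normc0.
have [hy|hy] := eqVneq (frob Y) 0.
  have -> : innerV (A X) (A Y) = 0 by rewrite (@frob0 R _ _ _ hy) linear0 innerV0r.
  by rewrite ComplexField.Normc.normc0.
have x0 : 0 < frob X by rewrite lt_def hx.
have y0 : 0 < frob Y by rewrite lt_def hy.
have K0 : 0 < Num.sqrt 2 * frob X * frob Y by rewrite !mulr_gt0.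
have h : ComplexField.Normc.normc (innerV (A X) (A Y)) / (Num.sqrt 2 * frob X * frob Y) <= delta_r r A.
  apply: lb_le_inf => // d hd; rewrite ler_pdivrMr //.
  have := @main_bound R m n p r A X Y d hd hXY hr x0 y0.
  by have -> : d * (Num.sqrt 2 * frob X * frob Y) = Num.sqrt 2 * d * frob X * frob Y by ring.
move: h; rewrite ler_pdivrMr // => h.
by have -> : Num.sqrt 2 * delta_r r A * frob X * frob Y = delta_r r A * (Num.sqrt 2 * frob X * frob Y) by ring.
Qed.
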